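(* Every open subset of an E-space $X$ is the union of a $\sigma$-point-finite collection of cozero-sets of $X$.
   Context: ''Space'' means topological $T_0$-space. A zero-set (cozero-set) of $X$ is $f^{-1}(0)$ (resp. its complement) for continuous $f:X\to[0,1]$. A U-representation of $V\subseteq X$ is a sequence $(U_n(V))_{n\in\mathbb{N}}$ with $V=\bigcup_n U_n(V)$, $U_n(V)\subseteq U_{n+1}(V)$, $U_{2n-1}(V)$ a zero-set, $U_{2n}(V)$ a cozero-set. A family $\alpha$ is an almost subbase of $X$ if U-representations of its members can be chosen so that $\alpha\cup\{X\setminus U_{2n-1}(V):V\in\alpha,n\in\mathbb{N}\}$ is a subbase of $X$. A family is strongly point-finite if every countably infinite subfamily contains a finite subfamily with empty intersection; $\sigma$-strongly point-finite ($\sigma$-point-finite) means a countable union of strongly point-finite (point-finite) families. An E-space is a space with a $\sigma$-strongly point-finite almost subbase. *)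

(* Defs.v *)
From HB Require Import structures.
From mathcomp Require Import all_boot all_order all_algebra.
From mathcomp Require Import all_classical all_reals all_analysis.
From mathcomp Require Import Rstruct Rstruct_topology.
Set Implicit Arguments. Unset Strict Implicit. Unset Printing Implicit Defensive.
Import Order.TTheory GRing.Theory Num.Theory.
Local Open Scope classical_set_scope.
Local Open Scope ring_scope.

Section Defs.
Variable X : topologicalType.

Definition zero_set (Z : set X) : Prop :=
  exists f : X -> Rdefinitions.R, continuous f /\
    (forall x, 0 <= f x <= 1) /\ Z = f @^-1` [set 0].

Definition cozero_set (C : set X) : Prop :=
  exists f : X -> Rdefinitions.R, continuous f /\
    (forall x, 0 <= f x <= 1) /\ C = ~` (f @^-1` [set 0]).

(* U-representation of V, 0-based: u k = U_(k+1)(V); so u (2k) = U_(2k+1)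
   is a zero-set and u (2k+1) = U_(2k+2) is a cozero-set. *)
Definition U_representation (V : set X) (u : nat -> set X) : Prop :=
  V = \bigcup_n u n /\ (forall n, u n `<=` u n.+1) /\
  (forall k, zero_set (u k.*2)) /\ (forall k, cozero_set (u k.*2.+1)).

Definition subbase (beta : set (set X)) : Prop :=
  (forall B, beta B -> open B) /\
  (forall W, open W -> forall x, W x ->
     exists H : set (set X), [/\ finite_set H, H `<=` beta,
        (\bigcap_(B in H) B) x & \bigcap_(B in H) B `<=` W]).

Definition almost_subbase (alpha : set (set X)) : Prop :=
  exists u : set X -> nat -> set X,
    (forall V, alpha V -> U_representation V (u V)) /\
    subbase (alpha `|` [set ~` (u V k.*2) | k in [set: nat] & V in alpha]).


Definition point_finite (F : set (set X)) : Prop :=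
  forall x, finite_set [set V | F V /\ V x].

Definition strongly_point_finite (F : set (set X)) : Prop :=
  forall G : set (set X), G `<=` F -> countable G -> infinite_set G ->
    exists H : set (set X), [/\ finite_set H, H `<=` G &
       \bigcap_(B in H) B = set0].

Definition sigma_point_finite (F : set (set X)) : Prop :=
  exists Fn : nat -> set (set X),
    (forall n, point_finite (Fn n)) /\ F = \bigcup_n Fn n.

Definition sigma_strongly_point_finite (F : set (set X)) : Prop :=
  exists Fn : nat -> set (set X),
    (forall n, strongly_point_finite (Fn n)) /\ F = \bigcup_n Fn n.

Definition E_space : Prop :=
  kolmogorov_space X /\
  exists alpha, almost_subbase alpha /\ sigma_strongly_point_finite alpha.

End Defs.

(* Main.v *)
Require Import Defs.
From mathcomp Require Import all_boot all_order all_algebra all_classical all_reals all_analysis.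
From mathcomp Require Import Rstruct Rstruct_topology zify.
Import Order.TTheory GRing.Theory Num.Theory.
Local Open Scope classical_set_scope.

Lemma cozeroT (X : topologicalType) : cozero_set [set: X].
Proof.
exists (fun=> 1%R); split; first exact: cst_continuous.
split; first by move=> x; rewrite ler01 lexx.
by apply/seteqP; split => x //= _ /= /eqP; rewrite oner_eq0.
Qed.

Lemma cozeroI (X : topologicalType) (A B : set X) :
  cozero_set A -> cozero_set B -> cozero_set (A `&` B).
Proof.
move=> [f [cf [f01 ->]]] [g [cg [g01 ->]]].
exists (fun x => f x * g x)%R; split.
  by move=> x; apply: continuousM; [apply: cf|apply: cg].
split.
  move=> x; have /andP[f0 f1] := f01 x; have /andP[g0 g1] := g01 x.
  by rewrite mulr_ge0 //= mulr_ile1.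
apply/seteqP; split => x /=.
  by move=> [/eqP fx /eqP gx] /eqP; rewrite mulf_eq0 (negbTE fx) (negbTE gx).
move=> /eqP; rewrite mulf_eq0 negb_or => /andP[fx gx].
by split => /eqP; [rewrite (negbTE fx)|rewrite (negbTE gx)].
Qed.

Lemma cozeroC (X : topologicalType) (Z : set X) :
  zero_set Z -> cozero_set (~` Z).
Proof. by move=> [f [cf [f01 ->]]]; exists f. Qed.

Lemma xget_ok (X : topologicalType) (x0 : X) (Q : set X) : Q !=set0 -> Q (xget x0 Q).
Proof. by move=> [q Qq]; apply: xgetPex; exists q. Qed.
Lemma spf_pf {X : topologicalType} {F : set (set X)} :
  strongly_point_finite F -> point_finite F.
Proof.
move=> sF x; apply: contrapT => /infiniteP/card_subP[C CE CS].
have [H [Hfin HC H0]] : exists H : set (set X), [/\ finite_set H, H `<=` C &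
       \bigcap_(B in H) B = set0].
  apply: sF.
  - by move=> V /CS[].
  - by rewrite /countable (card_le_eql CE) card_lexx.
  - by apply/infiniteP; rewrite (card_le_eqr CE) card_lexx.
have : (\bigcap_(B in H) B) x by move=> B /HC /CS[].
by rewrite H0.
Qed.
Definition bigI {X : Type} (F : set X -> set X) (f : seq (set X)) : set X :=
  foldr (fun V A => F V `&` A) setT f.
Definition Useq {X : Type} (s : seq (set X)) : set X := foldr setU set0 s.

Lemma bigIP {X : topologicalType} F (f : seq (set X)) y :
  bigI F f y <-> forall V, V \in f -> F V y.
Proof.
elim: f => [|V f IH] /=; first by split.
split.
- by move=> [FV /IH H] W; rewrite inE => /orP[/eqP->//|/H].
- move=> H; split; first by apply: H; rewrite mem_head.
  by apply/IH => W Wf; apply: H; rewrite inE Wf orbT.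
Qed.

Lemma UseqP {X : topologicalType} (s : seq (set X)) y :
  Useq s y <-> exists2 Z, Z \in s & Z y.
Proof.
elim: s => [|Z s IH] /=; first by split => // -[].
split.
- case=> [Zy|/IH[W Ws Wy]]; first by exists Z => //; rewrite mem_head.
  by exists W => //; rewrite inE Ws orbT.
- case=> W; rewrite inE => /orP[/eqP->|Ws Wy]; first by left.
  by right; apply/IH; exists W.
Qed.

Fixpoint greedy {X : Type} (A : set (set X)) (pick : set X -> X) (Q : set X)
  (s : seq (set X)) : Prop :=
  match s with
  | [::] => Q = set0
  | Z :: s' => [/\ A Z, Z (pick Q) & greedy A pick (Q `\` Z) s']
  end.

Lemma greedy_cover {X : topologicalType} {A pick} {s : seq (set X)} {Q} :
  greedy A pick Q s -> Q `<=` Useq s.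
Proof.
elim: s Q => [|Z s IH] Q /=; first by move=> ->.
case=> _ _ /IH H y Qy; have [Zy|nZy] := pselect (Z y); first by left.
by right; apply: H.
Qed.

Lemma greedy_A {X : topologicalType} {A pick} {s : seq (set X)} {Q} :
  greedy A pick Q s -> forall Z, Z \in s -> A Z.
Proof.
elim: s Q => [|Z s IH] Q //=.
case=> AZ _ /IH H W; rewrite inE => /orP[/eqP->//|]; exact: H.
Qed.

Lemma greedy_finite {X : Type} A pick :
  (forall p : X, finite_set [set Z | A Z /\ Z p]) ->
  forall r Q, finite_set [set s | greedy A pick Q s /\ (size s <= r)%N].
Proof.
move=> pf; elim=> [|r IH] Q.
  apply: (sub_finite_set _ (finite_set1 [::])) => s [_]; by case: s.
apply: (@sub_finite_set _ _ ([set [::]] `|` \bigcup_(Z in [set Z | A Z /\ Z (pick Q)])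
   [set Z :: s | s in [set s | greedy A pick (Q `\` Z) s /\ (size s <= r)%N]])).
  move=> [|Z s] [Hg Hs]; [by left|right].
  case: Hg => AZ Zp Hg; exists Z => //; exists s => //.
rewrite finite_setU; split; first exact: finite_set1.
apply: bigcup_finite => // Z _; apply: finite_image; exact: IH.
Qed.

Lemma seq_finite (T : eqType) (A : set T) :
  finite_set A ->
  forall r, finite_set [set s : seq T | (forall a, a \in s -> A a) /\ (size s <= r)%N].
Proof.
move=> fA; elim=> [|r IH].
  apply: (sub_finite_set _ (finite_set1 [::])) => s [_]; by case: s.
apply: (@sub_finite_set _ _ ([set [::]] `|` \bigcup_(a in A)
   [set a :: s | s in [set s : seq T | (forall a, a \in s -> A a) /\ (size s <= r)%N]])).
  move=> [|a s] [Hg Hs]; [by left|right].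
  exists a; first by apply: Hg; rewrite mem_head.
  exists s => //; split => // b bs; by apply: Hg; rewrite inE bs orbT.
rewrite finite_setU; split; first exact: finite_set1.
apply: bigcup_finite => // a _; apply: finite_image; exact: IH.
Qed.

Lemma greedy_exists {X : topologicalType} (A : set (set X)) pick :
  (forall Q, Q !=set0 -> Q (pick Q)) ->
  forall (g : seq (set X)) Q, (forall Z, Z \in g -> A Z) -> Q `<=` Useq g ->
  exists s, [/\ greedy A pick Q s, (size s <= size g)%N & {subset s <= g}].
Proof.
move=> pickP g; move: {2}(size g) (leqnn (size g)) => n.
elim: n g => [|n IH] g sg Q gA Qg.
  move: sg; rewrite leqn0 => /eqP/size0nil gnil; exists [::]; split => //=.
  by apply/seteqP; split => // y /Qg; rewrite gnil /= .
have [/eqP Q0|Qn0] := boolP (Q == set0); first by exists [::].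
have /pickP qQ : Q !=set0 by apply/set0P.
have [Z Zg Zq] := (UseqP g (pick Q)).1 (Qg _ qQ).
have [||y [Qy nZy]|s [gs ss sub]] := IH (rem Z g) _ (Q `\` Z).
- by rewrite size_rem //; case: (size g) sg.
- by move=> W /mem_rem; apply: gA.
- have [W Wg Wy] := (UseqP g y).1 (Qg _ Qy).
  apply/UseqP; exists W => //; apply: rem_mem => //.
  by apply/eqP => WZ; apply: nZy; rewrite -WZ.
exists (Z :: s); split => //=.
- by split => //; apply: gA.
- have g0 : (0 < size g)%N by case: (g) Zg.
  by move: ss g0; rewrite size_rem //; case: (size g).
- by move=> W; rewrite inE => /orP[/eqP->//|/sub/mem_rem].
Qed.
Lemma urep_mono {X : topologicalType} {V : set X} {uV} :
  U_representation V uV -> forall a b, (a <= b)%N -> uV a `<=` uV b.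
Proof.
move=> [_ [inc _]] a; elim=> [|b IH]; first by rewrite leqn0 => /eqP->.
rewrite leq_eqVlt => /orP[/eqP->//|]; rewrite ltnS => /IH H y /H; exact: inc.
Qed.

Lemma urep_sub {X : topologicalType} {V : set X} {uV} :
  U_representation V uV -> forall a, uV a `<=` V.
Proof. by move=> [-> _] a y ya; exists a. Qed.

Definition Al {X : Type} (Fn : nat -> set (set X)) n : set (set X) :=
  [set V | exists2 m, (m <= n)%N & Fn m V].
Definition An {X : Type} (Fn : nat -> set (set X)) (u : set X -> nat -> set X) n
  : set (set X) :=
  [set Z | exists V j, [/\ Al Fn n V, (j <= n)%N & Z = u V j.*2]].

Lemma Al_mono {X : Type} (Fn : nat -> set (set X)) n n' :
  (n <= n')%N -> Al Fn n `<=` Al Fn n'.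
Proof. by move=> nn' V [m mn FV]; exists m => //; apply: leq_trans nn'. Qed.

Lemma decomp (X : topologicalType) (Fn : nat -> set (set X)) u (x : X) :
  (forall V, (\bigcup_n Fn n) V -> U_representation V (u V)) ->
  forall h : seq (set X),
  (forall B, B \in h ->
     ((\bigcup_n Fn n) `|` [set ~` (u V k.*2) | k in [set: nat] & V in \bigcup_n Fn n]) B
     /\ B x) ->
  exists n f g, [/\ forall V, V \in f -> Al Fn n V /\ u V n.*2.+1 x,
                   forall Z, Z \in g -> An Fn u n Z /\ ~ Z x,
                   (size f <= n)%N, (size g <= n)%N &
                   forall y, (forall V, V \in f -> V y) ->
                     (forall Z, Z \in g -> ~ Z y) -> forall B, B \in h -> B y].
Proof.
move=> urep; elim=> [|B h IH] hB.
  by exists 0%N, [::], [::]; split.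
have [|n [f [g [fP gP sf sg hP]]]] := IH.
  by move=> C Ch; apply: hB; rewrite inE Ch orbT.
have [[[m _ FB]|[k _ [V [m _ FV] BV]]] Bx] := hB B (mem_head _ _).
- have [i uBi] : exists i, u B i x.
    have [uB _] := urep B (ex_intro2 _ _ m I FB).
    have : (\bigcup_n u B n) x by rewrite -uB.
    by case=> i _ ?; exists i.
  set n' := (n + m + i + 1)%N.
  have nn' : (n <= n')%N by rewrite /n'; lia.
  exists n', (B :: f), g; split.
  + move=> W; rewrite inE => /orP[/eqP->|Wf].
      split; first by exists m => //; rewrite /n'; lia.
      have le : (i <= n'.*2.+1)%N by rewrite /n'; lia.
      exact: (urep_mono (urep B (ex_intro2 _ _ m I FB)) _ _ le _ uBi).
    have [AW uW] := fP W Wf; split; first exact: Al_mono AW.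
    have [m' _ FW] := AW.
    have le : (n.*2.+1 <= n'.*2.+1)%N by lia.
    exact: (urep_mono (urep W (ex_intro2 _ _ m' I FW)) _ _ le _ uW).
  + move=> Z Zg; have [[W [j [AW jn ->]]] nZ] := gP Z Zg; split => //.
    by exists W, j; split => //; [exact: Al_mono AW|lia].
  + rewrite -[size (B :: f)]/(size f).+1 /n'; lia.
  + by rewrite /n'; lia.
  + move=> y fy gy C; rewrite inE => /orP[/eqP->|Ch].
      by apply: fy; rewrite mem_head.
    by apply: hP => // W Wf; apply: fy; rewrite inE Wf orbT.
- set n' := (n + m + k + 1)%N.
  have nn' : (n <= n')%N by rewrite /n'; lia.
  exists n', f, (u V k.*2 :: g); split.
  + move=> W Wf; have [AW uW] := fP W Wf; split; first exact: Al_mono AW.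
    have [m' _ FW] := AW.
    have le : (n.*2.+1 <= n'.*2.+1)%N by lia.
    exact: (urep_mono (urep W (ex_intro2 _ _ m' I FW)) _ _ le _ uW).
  + move=> Z; rewrite inE => /orP[/eqP->|Zg].
      split; last by move: Bx; rewrite -BV.
      by exists V, k; split => //; [exists m => //; rewrite /n'; lia|rewrite /n'; lia].
    have [[W [j [AW jn ->]]] nZ] := gP Z Zg; split => //.
    by exists W, j; split => //; [exact: Al_mono AW|lia].
  + by rewrite /n'; lia.
  + rewrite -[size (u V k.*2 :: g)]/(size g).+1 /n'; lia.
  + move=> y fy gy C; rewrite inE => /orP[/eqP->|Ch].
      by rewrite -BV; apply: gy; rewrite mem_head.
    by apply: hP => // Z Zg; apply: gy; rewrite inE Zg orbT.
Qed.

Lemma cozero_bigI (X : topologicalType) (F : set X -> set X) (f : seq (set X)) :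
  (forall V, V \in f -> cozero_set (F V)) -> cozero_set (bigI F f).
Proof.
elim: f => [|V f IH] H /=; first exact: cozeroT.
apply: cozeroI; first by apply: H; rewrite mem_head.
by apply: IH => W Wf; apply: H; rewrite inE Wf orbT.
Qed.

Lemma cozero_Useq (X : topologicalType) (s : seq (set X)) :
  (forall Z, Z \in s -> zero_set Z) -> cozero_set (~` Useq s).
Proof.
elim: s => [|Z s IH] H /=; first by rewrite setC0; exact: cozeroT.
rewrite setCU; apply: cozeroI; first by apply: cozeroC; apply: H; rewrite mem_head.
by apply: IH => W Wf; apply: H; rewrite inE Wf orbT.
Qed.

Theorem proposition5p7 (X : topologicalType) (U : set X) :
  E_space X -> open U ->
  exists C : set (set X),
    sigma_point_finite C /\ (forall V, C V -> cozero_set V) /\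
    U = \bigcup_(V in C) V.
Proof.
move=> [_ [alpha [[u [urepA sb]] [Fn [spf alphaE]]]]] oU.
subst alpha.
have pf n := spf_pf (spf n).
have [U0|/set0P [x0 Ux0]] := eqVneq U set0.
  exists set0; split; last split => //.
    exists (fun=> set0); split.
      by move=> n y; apply: (sub_finite_set _ (finite_set0 _)) => V [].
    by apply/seteqP; split => // V [].
  by rewrite U0; apply/seteqP; split => // y [].
pose pick := xget x0.
have pickP : forall Q : set X, Q !=set0 -> Q (pick Q) by move=> Q; apply: xget_ok.
pose Pn n f := bigI (fun V => u V n.*2.+1) f.
have AlA n V : Al Fn n V -> (\bigcup_n Fn n) V by case=> m _ FV; exists m.
have Pn_sub n f y : Pn n f y -> forall V, V \in f -> Al Fn n V -> V y.
  by move=> /bigIP H V Vf AV; apply: (urep_sub (urepA V (AlA _ _ AV)) _ _ (H V Vf)).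
pose C n := [set S | exists f s, [/\ forall V, V \in f -> Al Fn n V, (size f <= n)%N,
   greedy (An Fn u n) pick (Pn n f `&` ~` U) s, (size s <= n)%N &
   S = Pn n f `\` Useq s]].
exists (\bigcup_n C n); split; last split.
- exists C; split => // n y.
  pose Ty := [set V | Al Fn n V /\ V y].
  have fTy p : finite_set [set V | Al Fn n V /\ V p].
    apply: (@sub_finite_set _ _ (\bigcup_(m in `I_n.+1) [set V | Fn m V /\ V p])).
      by move=> V [[m mn FV] Vp]; exists m => //=; rewrite ltnS.
    by apply: bigcup_finite => // m _; apply: pf.
  have fAn : forall p, finite_set [set Z | An Fn u n Z /\ Z p].
    move=> p.
    apply: (@sub_finite_set _ _ (\bigcup_(V in [set V | Al Fn n V /\ V p])
        \bigcup_(j in `I_n.+1) [set u V j.*2])).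
      move=> Z [[V [j [AV jn ->]]] Zp]; exists V.
        by split => //; apply: (urep_sub (urepA V (AlA _ _ AV)) _ _ Zp).
      by exists j => //=; rewrite ltnS.
    apply: bigcup_finite; first exact: fTy.
    by move=> V _; apply: bigcup_finite => // j _; exact: finite_set1.
  apply: (@sub_finite_set _ _ (\bigcup_(f in [set f : seq (set X) |
        (forall a, a \in f -> Ty a) /\ (size f <= n)%N])
      [set Pn n f `\` Useq s | s in [set s | greedy (An Fn u n) pick (Pn n f `&` ~` U) s
                                       /\ (size s <= n)%N]])).
    move=> S [[f [s [fA sf gs ss ->]]] [Py _]]; exists f.
      split => // V Vf; split; first exact: fA.
      by apply: (Pn_sub n f y Py) => //; apply: fA.
    by exists s.
  apply: bigcup_finite; first by apply: seq_finite; exact: fTy.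
  by move=> f _; apply: finite_image; apply: greedy_finite.
- move=> S [n _ [f [s [fA sf gs ss ->]]]].
  rewrite setDE; apply: cozeroI.
    apply: cozero_bigI => V Vf.
    by have [_ [_ [_ H]]] := urepA V (AlA _ _ (fA V Vf)); apply: H.
  apply: cozero_Useq => Z Zs.
  have [V [j [AV _ ->]]] := greedy_A gs Z Zs.
  by have [_ [_ [H _]]] := urepA V (AlA _ _ AV); apply: H.
- apply/seteqP; split; last first.
    move=> y [S [n _ [f [s [fA sf gs ss ->]]]] [Py nsy]].
    apply: contrapT => nUy; apply: nsy.
    exact: (greedy_cover gs).
  move=> x Ux.
  have [H [Hfin Hsub Hx HU]] := sb.2 U oU x Ux.
  have [h Hh] := (finite_seqP H).1 Hfin.
  have [|n [f [g [fP gP sf sg hP]]]] := @decomp X Fn u x urepA h.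
    move=> B Bh; have HB : H B by rewrite Hh.
    by split; [exact: Hsub|exact: Hx].
  have Qg : Pn n f `&` ~` U `<=` Useq g.
    move=> y [Py nUy]; apply: contrapT => ngy; apply: nUy; apply: HU.
    move=> B HB; have Bh : B \in h by move: HB; rewrite Hh.
    apply: (hP y) => //.
      by move=> V Vf; apply: (Pn_sub n f y Py) => //; exact: (fP V Vf).1.
    by move=> Z Zg Zy; apply: ngy; apply/UseqP; exists Z.
  have [s [gs ss sub]] := @greedy_exists X (An Fn u n) pick pickP g _ (fun Z Zg => (gP Z Zg).1) Qg.
  exists (Pn n f `\` Useq s).
    exists n => //; exists f, s; split => //.
      by move=> V Vf; exact: (fP V Vf).1.
    exact: leq_trans ss sg.
  split.
    by apply/bigIP => V Vf; exact: (fP V Vf).2.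
  by move=> /UseqP[Z /sub Zg Zx]; exact: (gP Z Zg).2 Zx.
Qed.
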